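(* Let $a\in[-1,1)$ and $\psi_a=\mathds{1}_{[a,1]}$ on $[-1,1]$ (i.e. $\psi_a(t)=0$ for $t\in[-1,a)$ and $\psi_a(t)=1$ for $t\in[a,1]$). Write $P_{\mathcal{A}_+}(\psi_a)=\sum_{n=0}^\infty c_nt^n$ with $c_n\ge0$, and let $S(a)=\{n\in\mathbb{N}: c_n>0\}$. Then $S(a)=\{0,1,2\}$ if and only if $0<a\le\frac{1}{\sqrt5}$. Moreover, for every $a\in(0,1/\sqrt5]$, \[ P_{\mathcal{A}_+}(\psi_a)=\frac18(4-9a+5a^3)+\frac34(1-a^2)t+\frac{15}{8}(a-a^3)t^2. \]
   Context: $\mathbb{N}=\{0,1,2,\dots\}$. $\mathcal{A}_+=\{\sum_{n=0}^\infty a_nt^n : a_n\ge0,\ \text{the series converges in }L^2([-1,1])\}$ (real $L^2$ for Lebesgue measure, convergence of partial sums); it is a closed convex cone, $P_{\mathcal{A}_+}$ denotes the metric projection onto it (the unique nearest point), and every element of $\mathcal{A}_+$ has a unique representation $\sum_n c_nt^n$ with $c_n\ge0$, so $S(a)$ is well defined. *)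

(* Defs.v *)
From HB Require Import structures.
From mathcomp Require Import all_boot all_order all_algebra.
From mathcomp Require Import all_classical all_reals all_analysis.
Set Implicit Arguments. Unset Strict Implicit. Unset Printing Implicit Defensive.
Import Order.TTheory GRing.Theory Num.Theory.
Local Open Scope classical_set_scope.
Local Open Scope ring_scope.

Section Defs.
Variable R : realType.

Definition I11 : set R := `[(-1)%R, 1%R].

Definition L2sq (g : R -> R) : \bar R :=
  (\int[@lebesgue_measure R]_(x in I11) ((g x) ^+ 2)%:E)%E.

Definition isL2 (g : R -> R) : Prop :=
  measurable_fun I11 g /\ (L2sq g < +oo)%E.

Definition psum (c : nat -> R) (N : nat) (t : R) : R :=
  \sum_(0 <= n < N) c n * t ^+ n.

(* f is the L^2([-1,1]) limit of the series sum c_n t^n with all c_n >= 0,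
   i.e. f (as an L^2 class) belongs to the cone A_+ with coefficients c *)
Definition Aplus_rep (c : nat -> R) (f : R -> R) : Prop :=
  (forall n, 0 <= c n) /\ isL2 f /\
  ((fun N => L2sq (fun t => (psum c N t - f t)%R)) @ \oo --> 0%E).

(* c is the coefficient sequence of the metric projection P_{A_+}(psi):
   the series with coefficients c converges in L^2 to some f in A_+ which
   is a nearest point of A_+ to psi. *)
Definition proj_coeffs (psi : R -> R) (c : nat -> R) : Prop :=
  exists f, Aplus_rep c f /\
    forall c' f', Aplus_rep c' f' ->
      (L2sq (fun t => (psi t - f t)%R) <= L2sq (fun t => (psi t - f' t)%R))%E.

Definition psi (a : R) (t : R) : R := if a <= t then 1 else 0.

Definition supp (c : nat -> R) : set nat := [set n | 0 < c n].

End Defs.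

(* Main.v *)
Require Import Defs.
From HB Require Import structures.
From mathcomp Require Import all_boot all_order all_algebra.
From mathcomp Require Import all_classical all_reals all_analysis.
From mathcomp Require Import measurable_realfun lebesgue_integrable lebesgue_Rintegral.
From mathcomp Require Import lra ring.
Set Implicit Arguments. Unset Strict Implicit. Unset Printing Implicit Defensive.
Import Order.TTheory GRing.Theory Num.Theory.
Import numFieldNormedType.Exports.
Local Open Scope classical_set_scope.
Local Open Scope ring_scope.

Section Alg.
Variable R : realFieldType.

Definition Mm (k : nat) : R := (1 - (-1) ^+ k.+1) / k.+1%:R.
Definition Pa (a : R) (k : nat) : R := (1 - a ^+ k.+1) / k.+1%:R.
Definition q0 (a : R) : R := (4 - 9 * a + 5 * a ^+ 3) / 8.
Definition q1 (a : R) : R := 3 / 4 * (1 - a ^+ 2).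
Definition q2 (a : R) : R := 15 / 8 * (a - a ^+ 3).
Definition gfun (a : R) (n : nat) : R :=
  Pa a n - (q0 a * Mm n + q1 a * Mm n.+1 + q2 a * Mm n.+2).

Lemma Mm_even m : Mm m.*2 = 2 / (m.*2).+1%:R.
Proof.
rewrite /Mm -signr_odd /= odd_double /= expr1; congr (_ / _); ring.
Qed.

Lemma Mm_odd m : Mm m.*2.+1 = 0.
Proof. by rewrite /Mm -signr_odd /= odd_double /= expr0 subrr mul0r. Qed.

Lemma pw_bound (x : R) k : 0 <= x -> 5 * x <= 1 -> (2 <= k)%N ->
  5 * ((k.*2.+1)%:R * x ^+ k) <= 1.
Proof.
move=> x0 x5; elim: k => [//|k IH]; rewrite leq_eqVlt => /orP [/eqP <-|].
  rewrite -[2.*2.+1]/(5%N) expr2; nra.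
rewrite ltnS => /IH {}IH.
have hk : 0 <= x ^+ k by exact: exprn_ge0.
have -> : (k.+1.*2.+1)%:R = (k.*2.+1)%:R + 2 :> R.
  by rewrite doubleS -!natr1; ring.
rewrite exprS.
have hK : 1 <= (k.*2.+1)%:R :> R by rewrite ler1n.
set K := (k.*2.+1)%:R in IH hK *; set y := x ^+ k in IH hk *.
have h1 : 5 * ((K + 2) * (x * y)) <= (K + 2) * y.
  have : 0 <= (K + 2) * y by apply: mulr_ge0 => //; lra.
  nra.
have h2 : (K + 2) * y <= 5 * (K * y) by nra.
lra.
Qed.


Definition Fo (x : R) (k : nat) : R :=
  3 * k%:R * (1 - x) - (k.*2.+1)%:R * (1 - x ^+ k).

Lemma Fo_step x k : Fo x k.+1 - Fo x k =
  1 - 3 * x + 2 * x ^+ k.+1 - (k.*2.+1)%:R * x ^+ k * (1 - x).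
Proof.
rewrite /Fo doubleS -!natr1 exprS; set K := (k.*2)%:R; set y := x ^+ k.
ring.
Qed.

Lemma Fo_ge0 x k : 0 <= x -> 5 * x <= 1 -> (1 <= k)%N -> 0 <= Fo x k.
Proof.
move=> x0 x5; elim: k => [//|k IH] hk.
have E := Fo_step x k; move: hk; rewrite leq_eqVlt => /orP [/eqP hk0|].
  by case: k hk0 {IH E} => // _; rewrite /Fo -[1.*2.+1]/(3%N) expr1; lra.
rewrite ltnS => hk; have {}IH := IH hk.
have hkx : 0 <= x ^+ k.+1 by exact: exprn_ge0.
move: hk; rewrite leq_eqVlt => /orP [/eqP hk1|hk2].
  subst k; rewrite /= -[1.*2.+1]/(3%N) in E.
  have : 0 <= 1 - 6 * x + 5 * x ^+ 2 by nra.
  rewrite !exprS expr0 in E hkx * => H; nra.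
have hb := pw_bound x0 x5 hk2.
set K := (k.*2.+1)%:R in hb E *; set y := x ^+ k in hb E *.
have hy : 0 <= y by exact: exprn_ge0.
have hK : 0 <= K by exact: ler0n.
have hKy : 0 <= K * y by exact: mulr_ge0.
have h1 : K * y * (1 - x) <= K * y by nra.
nra.
Qed.

Lemma Fo_gt0 x k : 0 <= x -> 5 * x <= 1 -> (3 <= k)%N -> 0 < Fo x k.
Proof.
move=> x0 x5; elim: k => [//|k IH] hk.
have E := Fo_step x k.
have hkx : 0 <= x ^+ k.+1 by exact: exprn_ge0.
have hF : 0 <= Fo x k by apply: Fo_ge0 => //; move: hk; rewrite ltnS => /(leq_trans _); apply.
have hk2 : (2 <= k)%N by move: hk; rewrite ltnS.
have hb := pw_bound x0 x5 hk2.
set K := (k.*2.+1)%:R in hb E *; set y := x ^+ k in hb E *.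
have hy : 0 <= y by exact: exprn_ge0.
have hK : 0 <= K by exact: ler0n.
have hKy : 0 <= K * y by exact: mulr_ge0.
have h1 : K * y * (1 - x) <= K * y by nra.
nra.
Qed.


Lemma g_odd a m : gfun a m.*2.+1 =
  - Fo (a ^+ 2) m.+1 / (2 * m.+1%:R * (m.+1.*2.+1)%:R).
Proof.
rewrite /gfun /Pa -doubleS Mm_odd Mm_even Mm_odd -mul2n exprM /Fo.
set X := (a ^+ 2) ^+ m.+1.
have e1 : ((2 * m.+1)%N%:R : R) = 2 * m.+1%:R by rewrite natrM.
have e2 : ((2 * m.+1).+1%:R : R) = 2 * m.+1%:R + 1 by rewrite -natr1 e1.
rewrite mul2n in e1 e2; rewrite !mul2n e1 e2 /q1.
have hK : 0 < m.+1%:R :> R by exact: ltr0Sn.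
field; lra.
Qed.

Lemma g_even a m : gfun a m.*2 * (4 * ((m.*2)%:R + 1) * ((m.*2)%:R + 3)) =
  - a * (4 * ((m.*2)%:R + 3) * a ^+ m.*2 + 6 * (m.*2)%:R - 12
         - 10 * (m.*2)%:R * a ^+ 2).
Proof.
rewrite /gfun /Pa -doubleS Mm_even Mm_odd Mm_even exprS.
have e1 : ((m.+1).*2.+1%:R : R) = (m.*2)%:R + 3.
  by rewrite doubleS -!natr1; ring.
rewrite e1 -natr1 /q0 /q2.
have hK : 0 <= (m.*2)%:R :> R by exact: ler0n.
field; lra.
Qed.

Lemma g_small a n : (n <= 2)%N -> gfun a n = 0.
Proof.
case: n => [|[|[|]]] // _; rewrite /gfun /Pa /Mm /q0 /q1 /q2 /=;
  by rewrite !exprS !expr0; field.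
Qed.


Lemma g_sign a n : 0 < a -> 5 * a ^+ 2 <= 1 -> (3 <= n)%N ->
  gfun a n <= 0 /\ ((4 <= n)%N -> gfun a n < 0).
Proof.
move=> a0 a5 n3.
have x0 : 0 <= a ^+ 2 by exact: sqr_ge0.
have [m hm] : exists m, n = m.*2 \/ n = m.*2.+1.
  exists n./2; rewrite -{1 3}(odd_double_half n); case: (odd n); [by right | by left].
case: hm => ->{n} in n3 *.
- have m2 : (2 <= m)%N by move: n3; rewrite -[3%N]/(1.*2.+1) ltn_double.
  have E := g_even a m.
  have hN : 4 <= (m.*2)%:R :> R.
    by rewrite -[4]/((2.*2)%:R) ler_nat leq_double.
  have hY : 0 <= a ^+ m.*2 by apply: exprn_ge0; lra.
  set N := (m.*2)%:R in E hN; set Y := a ^+ m.*2 in E hY.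
  have hS : 0 < 4 * (N + 3) * Y + 6 * N - 12 - 10 * N * a ^+ 2.
    have : 10 * N * a ^+ 2 <= 2 * N by nra.
    have : 0 <= 4 * (N + 3) * Y by apply: mulr_ge0 => //; lra.
    lra.
  have hP : 0 < 4 * (N + 1) * (N + 3) by apply: mulr_gt0; [apply: mulr_gt0|]; lra.
  have hg : gfun a m.*2 < 0.
    have : gfun a m.*2 * (4 * (N + 1) * (N + 3)) < 0.
      by rewrite E; rewrite mulNr oppr_lt0; apply: mulr_gt0.
    by rewrite pmulr_llt0.
  by split => //; apply: ltW.
- have m1 : (1 <= m)%N by move: n3; rewrite ltnS -[2%N]/(1.*2) leq_double.
  rewrite g_odd.
  have hD : 0 < 2 * m.+1%:R * (m.+1.*2.+1)%:R :> R.
    by apply: mulr_gt0; [apply: mulr_gt0|]; rewrite ?ltr0Sn ?ltr0n.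
  split.
    rewrite mulNr oppr_le0; apply: divr_ge0; last exact: ltW.
    by apply: Fo_ge0 => //; lra.
  move=> n4; rewrite mulNr oppr_lt0; apply: divr_gt0 => //.
  apply: Fo_gt0 => //.
  by move: n4; rewrite ltnS -[3%N]/(1.*2.+1) ltn_double.
Qed.


Lemma Mvals : [/\ Mm 0 = 2, Mm 1 = 0, Mm 2 = 2 / 3, Mm 3 = 0
   & [/\ Mm 4 = 2 / 5, Mm 5 = 0 & Mm 6 = 2 / 7]].
Proof.
have m1 : Mm 1 = 0 := Mm_odd 0. have m3 : Mm 3 = 0 := Mm_odd 1.
have m5 : Mm 5 = 0 := Mm_odd 2.
have m0 : Mm 0 = 2 / 1%:R := Mm_even 0. have m2 : Mm 2 = 2 / 3%:R := Mm_even 1.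
have m4 : Mm 4 = 2 / 5%:R := Mm_even 2. have m6 : Mm 6 = 2 / 7%:R := Mm_even 3.
by rewrite m0 m1 m2 m3 m4 m5 m6 divr1.
Qed.

Lemma Pvals a : [/\ Pa a 0 = 1 - a, Pa a 1 = (1 - a ^+ 2) / 2,
  Pa a 2 = (1 - a ^+ 3) / 3 & Pa a 3 = (1 - a ^+ 4) / 4].
Proof. by rewrite /Pa /=; split; rewrite ?expr1 ?divr1. Qed.

Lemma fwd_alg a c0 c1 c2 : -1 <= a < 1 -> 0 < c2 ->
  Pa a 0 = c0 * Mm 0 + c1 * Mm 1 + c2 * Mm 2 ->
  Pa a 1 = c0 * Mm 1 + c1 * Mm 2 + c2 * Mm 3 ->
  Pa a 2 = c0 * Mm 2 + c1 * Mm 3 + c2 * Mm 4 ->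
  Pa a 3 <= c0 * Mm 3 + c1 * Mm 4 + c2 * Mm 5 ->
  0 < a /\ 5 * a ^+ 2 <= 1.
Proof.
move=> /andP [ha1 ha2] c2p.
have [-> -> -> -> [-> -> _]] := Mvals; have [-> -> -> ->] := Pvals a.
move=> E0 E1 E2 I3.
have hc1 : c1 = 3 / 4 * (1 - a ^+ 2) by lra.
have hc2 : c2 = 15 / 8 * (a - a ^+ 3) by lra.
have a0 : 0 < a.
  rewrite ltNge; apply/negP => a0.
  have : a - a ^+ 3 <= 0.
    have -> : a - a ^+ 3 = a * ((1 - a) * (1 + a)) by ring.
    apply: mulr_le0_ge0 => //; apply: mulr_ge0; lra.
  lra.
split => //.
have h4 : (1 - a ^+ 2) * (5 * a ^+ 2 - 1) <= 0.
  have -> : (1 - a ^+ 2) * (5 * a ^+ 2 - 1) = 20 * ((1 - a ^+ 4) / 4 - (3 / 4 * (1 - a ^+ 2)) * (2 / 5)).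
    by field.
  rewrite -hc1; lra.
have h1 : 0 < 1 - a ^+ 2.
  have -> : 1 - a ^+ 2 = (1 - a) * (1 + a) by ring.
  apply: mulr_gt0; lra.
have : 5 * a ^+ 2 - 1 <= 0.
  by move: h4; rewrite pmulr_rle0.
lra.
Qed.

Lemma q_pos a : 0 < a -> 5 * a ^+ 2 <= 1 ->
  [/\ 0 < q0 a, 0 < q1 a & 0 < q2 a].
Proof.
move=> a0 a5.
have a1 : a < 3 / 5.
  rewrite ltNge; apply/negP => h; have : 9 / 25 <= a ^+ 2.
    by rewrite expr2; nra.
  lra.
have h2 : 0 < 1 - a ^+ 2 by lra.
rewrite /q0 /q1 /q2; split.
- have -> : 4 - 9 * a + 5 * a ^+ 3 = (1 - a) * (4 - 5 * a - 5 * a ^+ 2) by ring.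
  apply: divr_gt0 => //; apply: mulr_gt0; lra.
- apply: mulr_gt0 => //; lra.
- apply: mulr_gt0; first lra.
  have -> : a - a ^+ 3 = a * (1 - a ^+ 2) by ring.
  exact: mulr_gt0.
Qed.

Lemma bwd_alg a c0 c1 c2 c3 :
  c0 * Mm 0 + c1 * Mm 1 + c2 * Mm 2 + c3 * Mm 3 = q0 a * Mm 0 + q1 a * Mm 1 + q2 a * Mm 2 ->
  c0 * Mm 1 + c1 * Mm 2 + c2 * Mm 3 + c3 * Mm 4 = q0 a * Mm 1 + q1 a * Mm 2 + q2 a * Mm 3 ->
  c0 * Mm 2 + c1 * Mm 3 + c2 * Mm 4 + c3 * Mm 5 = q0 a * Mm 2 + q1 a * Mm 3 + q2 a * Mm 4 ->
  c0 * Mm 3 + c1 * Mm 4 + c2 * Mm 5 + c3 * Mm 6 = q0 a * Mm 3 + q1 a * Mm 4 + q2 a * Mm 5 ->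
  [/\ c0 = q0 a, c1 = q1 a, c2 = q2 a & c3 = 0].
Proof.
have [-> -> -> -> [-> -> ->]] := Mvals.
set x0 := q0 a; set x1 := q1 a; set x2 := q2 a.
move=> E0 E1 E2 E3; split; lra.
Qed.

End Alg.


Section S.
Variable R : realType.
Notation mu := (@lebesgue_measure R).
Notation D := (@I11 R).

Lemma int_mono (l r : R) (k : nat) : l < r ->
  \int[mu]_(x in `[l, r]) (x ^+ k) = (r ^+ k.+1 - l ^+ k.+1) / k.+1%:R.
Proof.
move=> lr.
rewrite /Rintegral (@continuous_FTC2 _ _ (fun x => k.+1%:R^-1 * x ^+ k.+1)) //=.
- by rewrite -mulrBr mulrC.
- by apply: continuous_subspaceT => x; exact: exprn_continuous.
- have cF : continuous (fun x : R => k.+1%:R^-1 * x ^+ k.+1).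
    move=> x; apply: cvgM; [exact: cvg_cst|exact: exprn_continuous].
  split.
  + move=> x _; apply: derivableM; [exact: derivable_cst|exact: exprn_derivable].
  + exact: cvg_at_right_filter (cF l).
  + exact: cvg_at_left_filter (cF r).
- move=> x _; rewrite derive1Ml; last exact: exprn_derivable.
  rewrite exp_derive1 /= mulrA mulVf ?mul1r //.
Qed.

Lemma mI : measurable (D : set (measurableTypeR R)).
Proof. exact: measurable_itv. Qed.

Lemma muI : (mu D < +oo)%E.
Proof. by rewrite /I11 lebesgue_measure_itv /=; case: ifP => _; rewrite // -EFinD ltry. Qed.

Lemma intD (f g : R -> R) : mu.-integrable D (EFin \o f) ->
  mu.-integrable D (EFin \o g) ->
  mu.-integrable D (EFin \o (fun x => f x + g x)).
Proof.
move=> hf hg; apply: (eq_integrable mI _ _ _ (integrableD mI hf hg)) => //.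
Qed.

Lemma intZ (k : R) (f : R -> R) : mu.-integrable D (EFin \o f) ->
  mu.-integrable D (EFin \o (fun x => k * f x)).
Proof.
move=> hf; apply: (eq_integrable mI _ _ _ (integrableZl mI k hf)) => //.
Qed.

Lemma L2P (g : R -> R) : isL2 g <->
  measurable_fun D g /\ mu.-integrable D (EFin \o (fun x => g x ^+ 2)).
Proof.
have mg2 : measurable_fun D g -> measurable_fun D (EFin \o (fun x => g x ^+ 2)).
  by move=> mg; apply/measurable_EFinP; exact: measurable_funX.
have E : (\int[mu]_(x in D) `|(EFin \o (fun x => (g x ^+ 2)%R)) x| = L2sq g)%E.
  by apply: eq_integral => x _; rewrite /= ?gee0_abs ?ger0_norm ?lee_fin ?sqr_ge0.
split.
- move=> [mg lt]; split => //; apply/integrableP; split; first exact: mg2.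
  by rewrite E.
- by move=> [mg /integrableP [_ lt]]; split => //; rewrite -E.
Qed.

Lemma normM_le (x y : R) : `|x * y| <= x ^+ 2 + y ^+ 2.
Proof.
rewrite normrM -(real_normK (num_real x)) -(real_normK (num_real y)).
have hx := normr_ge0 x; have hy := normr_ge0 y.
nra.
Qed.

Lemma int_mul (g h : R -> R) : isL2 g -> isL2 h ->
  mu.-integrable D (EFin \o (fun x => g x * h x)).
Proof.
move=> /L2P [mg ig] /L2P [mh ih].
apply: (le_integrable mI _ _ (intD ig ih)).
  by apply/measurable_EFinP; exact: measurable_funM.
move=> x _ /=; rewrite lee_fin [X in _ <= X]ger0_norm ?addr_ge0 ?sqr_ge0 //.
exact: normM_le.
Qed.

Lemma isL2_ext (g h : R -> R) : (forall x, g x = h x) -> isL2 g -> isL2 h.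
Proof. by move=> e; have -> : g = h by apply: funext. Qed.

Lemma isL2D (g h : R -> R) : isL2 g -> isL2 h -> isL2 (fun x => g x + h x).
Proof.
move=> Lg Lh; have := int_mul Lg Lh.
move: Lg Lh => /L2P [mg ig] /L2P [mh ih] igh; apply/L2P; split.
  exact: measurable_funD.
apply: (eq_integrable mI _ _ _ (intD ig (intD (intZ 2 igh) ih))).
by move=> x _ /=; congr EFin; ring.
Qed.

Lemma isL2Z (k : R) (g : R -> R) : isL2 g -> isL2 (fun x => k * g x).
Proof.
move=> /L2P [mg ig]; apply/L2P; split.
  by apply: measurable_funM => //; exact: measurable_cst.
apply: (eq_integrable mI _ _ _ (intZ (k ^+ 2) ig)).
by move=> x _ /=; congr EFin; ring.
Qed.

Lemma isL2B (g h : R -> R) : isL2 g -> isL2 h -> isL2 (fun x => g x - h x).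
Proof.
move=> Lg Lh; apply: (isL2_ext _ (isL2D Lg (isL2Z (-1) Lh))).
by move=> x; ring.
Qed.

Lemma isL2_bdd (g : R -> R) (M : R) : measurable_fun D g ->
  (forall x, D x -> `|g x| <= M) -> isL2 g.
Proof.
move=> mg bg; apply/L2P; split => //.
apply: measurable_bounded_integrable.
- exact: mI.
- exact: muI.
- exact: measurable_funX.
- exists (M ^+ 2); split; first by rewrite num_real.
  move=> M' HM' x Dx /=.
  rewrite ger0_norm ?sqr_ge0 //; apply/ltW/(le_lt_trans _ HM').
  rewrite -(real_normK (num_real (g x))) ler_pXn2r ?nnegrE ?normr_ge0 ?bg //.
  exact: (le_trans _ (bg x Dx)).
Qed.

Lemma isL2_mono (n : nat) : isL2 (fun x : R => x ^+ n).
Proof.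
apply: (@isL2_bdd _ 1); first exact: exprn_measurable.
move=> x; rewrite /I11 /= => /andP [h1 h2]; rewrite !bnd_simp in h1 h2.
by rewrite normrX exprn_ile1 // ler_norml h1 h2.
Qed.

Lemma psiE (a : R) : psi a = (cst (1 : R)) \_ `[a, +oo[.
Proof.
by apply: funext => x; rewrite /psi patchE mem_setE in_itv /= andbT.
Qed.

Lemma isL2_psi (a : R) : isL2 (psi a).
Proof.
apply: (@isL2_bdd _ 1).
  rewrite psiE; apply/measurable_restrict => //.
  - exact: mI.
move=> x _; rewrite /psi; case: ifP => _; rewrite ?normr1 ?normr0 //.
Qed.

Lemma psumS (c : nat -> R) N t : psum c N.+1 t = psum c N t + c N * t ^+ N.
Proof. by rewrite /psum big_nat_recr. Qed.

Lemma psum0 (c : nat -> R) t : psum c 0 t = 0.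
Proof. by rewrite /psum big_geq. Qed.

Lemma isL2_psum (c : nat -> R) N : isL2 (psum c N).
Proof.
elim: N => [|N IH].
  apply: (isL2_ext (g := fun x => 0 * x ^+ 0)); last exact: isL2Z (isL2_mono 0).
  by move=> x; rewrite psum0 mul0r.
apply: (isL2_ext (g := fun x => psum c N x + c N * x ^+ N)).
  by move=> x; rewrite psumS.
exact: isL2D IH (isL2Z _ (isL2_mono N)).
Qed.

Definition ip (g h : R -> R) : R := \int[mu]_(x in D) (g x * h x).

Lemma ipC g h : ip g h = ip h g.
Proof. by rewrite /ip; apply: eq_Rintegral => x _; rewrite mulrC. Qed.

Lemma ipDl g1 g2 h : isL2 g1 -> isL2 g2 -> isL2 h ->
  ip (fun x => g1 x + g2 x) h = ip g1 h + ip g2 h.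
Proof.
move=> L1 L2 Lh; rewrite /ip.
transitivity (\int[mu]_(x in D) (g1 x * h x + g2 x * h x)).
  by apply: eq_Rintegral => x _; rewrite mulrDl.
by apply: RintegralD; [exact: mI|exact: int_mul|exact: int_mul].
Qed.

Lemma ipZl k g h : isL2 g -> isL2 h ->
  ip (fun x => k * g x) h = k * ip g h.
Proof.
move=> Lg Lh; rewrite /ip.
transitivity (\int[mu]_(x in D) (k * (g x * h x))).
  by apply: eq_Rintegral => x _; rewrite mulrA.
by apply: RintegralZl; [exact: mI|exact: int_mul].
Qed.

Lemma ipBl g1 g2 h : isL2 g1 -> isL2 g2 -> isL2 h ->
  ip (fun x => g1 x - g2 x) h = ip g1 h - ip g2 h.
Proof.
move=> L1 L2 Lh; rewrite /ip.
transitivity (\int[mu]_(x in D) (g1 x * h x - g2 x * h x)).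
  by apply: eq_Rintegral => x _; rewrite mulrBl.
by apply: RintegralB; [exact: mI|exact: int_mul|exact: int_mul].
Qed.

Lemma ip_ge0 g : 0 <= ip g g.
Proof. by apply: Rintegral_ge0 => x _; rewrite -expr2 sqr_ge0. Qed.

Lemma L2sqE g : isL2 g -> L2sq g = (ip g g)%:E.
Proof.
move=> Lg; rewrite /ip /Rintegral fineK.
  by apply: eq_integral => x _; rewrite expr2.
exact: (integrable_fin_num mI (int_mul Lg Lg)).
Qed.

Lemma ip_mono j k : ip (fun x => x ^+ j) (fun x => x ^+ k) =
  (1 - (-1) ^+ (j + k).+1) / (j + k).+1%:R.
Proof.
rewrite /ip.
transitivity (\int[mu]_(x in D) (x ^+ (j + k))).
  by apply: eq_Rintegral => x _; rewrite exprD.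
by rewrite /I11 int_mono ?expr1n // ltrN10.
Qed.

Lemma setI_a (a : R) : -1 <= a ->
  D `&` [set` `[a, +oo[] = [set` `[a, 1]].
Proof.
move=> ha; apply/seteqP; split => x /=.
  rewrite /I11 /= => -[/andP [h1 h2] /andP [h3 h4]].
  rewrite !bnd_simp in h1 h2 h3 h4.
  by apply/andP; rewrite !bnd_simp; split.
rewrite /I11 /= => /andP [h1 h2]; rewrite !bnd_simp in h1 h2.
by split; apply/andP; rewrite !bnd_simp; split => //; lra.
Qed.

Lemma ip_psi (a : R) k : -1 <= a < 1 ->
  ip (psi a) (fun x => x ^+ k) = (1 - a ^+ k.+1) / k.+1%:R.
Proof.
move=> /andP [ha1 ha2]; rewrite /ip.
transitivity (\int[mu]_(x in D) (((fun x => x ^+ k) \_ [set` `[a, +oo[]) x)).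
  by apply: eq_Rintegral => x _; rewrite psiE !patchE; case: ifP; rewrite ?mul1r ?mul0r.
by rewrite -Rintegral_mkcondr setI_a // int_mono // expr1n.
Qed.


Lemma seq_small (r : nat -> R) : r @ \oo --> 0 ->
  forall e, 0 < e -> forall N0, exists N, (N0 <= N)%N /\ r N < e.
Proof.
move=> H e e0 N0; have [M _ HM] := cvgr_lt 0 H e e0.
exists (maxn M N0); split; first exact: leq_maxr.
apply: HM; rewrite /= leq_maxl //.
Qed.

Lemma ev_cvg (r r' : nat -> R) K : (forall N, (K <= N)%N -> r N = r' N) ->
  r @ \oo --> 0 -> r' @ \oo --> 0.
Proof.
move=> E H; apply: cvg_trans H; apply: near_eq_cvg.
by exists K => // N /= hN; rewrite E.
Qed.

Lemma alg_le (A B d : R) : 0 < d -> 0 <= B ->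
  (forall e, 0 < e -> e < d -> 0 <= e * (A + e * B)) -> 0 <= A.
Proof.
move=> d0 B0 H; rewrite leNgt; apply/negP => A0.
have P : 0 < d * B - A by nra.
pose e := d * (- A) / (2 * (d * B - A)).
have e0 : 0 < e by rewrite /e; apply: divr_gt0; nra.
have ed : e < d.
  rewrite /e ltr_pdivrMr; last nra.
  nra.
have eA : A + e * B < 0.
  have -> : A + e * B = A * (d * B - 2 * A) / (2 * (d * B - A)).
    by rewrite /e; field; nra.
  by rewrite pmulr_llt0 ?invr_gt0 ?nmulr_rlt0; nra.
have := H e e0 ed; rewrite leNgt => /negP; apply.
by rewrite pmulr_rlt0.
Qed.

Lemma le0_of_eps (x K : R) : 0 <= K -> (forall e, 0 < e -> x <= e * K) -> x <= 0.
Proof.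
move=> K0 H; rewrite leNgt; apply/negP => x0.
have := H (x / (K + 1)) (divr_gt0 x0 (ltr_wpDl K0 ltr01)).
rewrite mulrAC ler_pdivlMr; last nra.
nra.
Qed.

Notation Q g := (ip g g).
Notation mono n := (fun x : R => x ^+ n).

Lemma ip_psum (c : nat -> R) N h : isL2 h ->
  ip (psum c N) h = \sum_(0 <= j < N) c j * ip (mono j) h.
Proof.
move=> Lh; elim: N => [|N IH].
  rewrite big_geq // /ip; transitivity (\int[mu]_(x in D) (0 : R)).
    by apply: eq_Rintegral => x _; rewrite psum0 mul0r.
  by rewrite Rintegral_cst ?mul0r //; exact: mI.
rewrite big_nat_recr //= -IH.
have -> : psum c N.+1 = (fun x => psum c N x + c N * x ^+ N).
  by apply: funext => x; rewrite psumS.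
by rewrite ipDl ?ipZl //; [exact: isL2_mono | exact: isL2_psum | exact: isL2Z (isL2_mono N)].
Qed.

Lemma Qexp g h e : isL2 g -> isL2 h ->
  Q (fun x => g x + e * h x) = Q g + 2 * e * ip g h + e ^+ 2 * Q h.
Proof.
move=> Lg Lh.
have Leh := isL2Z e Lh; have Lgh := isL2D Lg Leh.
rewrite ipDl // ipZl //.
rewrite (ipC g) (ipC h) ipDl // ipZl // ipDl // ipZl // (ipC h g).
ring.
Qed.

Lemma ip_zero g : isL2 g -> Q g = 0 -> forall h, isL2 h -> ip g h = 0.
Proof.
move=> Lg Q0 h Lh.
have H1 : 0 <= 2 * ip g h.
  apply: (@alg_le _ (Q h) 1) => //; first exact: ip_ge0.
  move=> e e0 _; have := ip_ge0 (fun x => g x + e * h x).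
  by rewrite Qexp // Q0; nra.
have H2 : 0 <= - (2 * ip g h).
  apply: (@alg_le _ (Q h) 1) => //; first exact: ip_ge0.
  move=> e e0 _; have := ip_ge0 (fun x => g x + (- e) * h x).
  by rewrite Qexp // Q0; nra.
lra.
Qed.

Lemma Aplus_seq c f : Aplus_rep c f ->
  (fun N => Q (fun t => psum c N t - f t)) @ \oo --> 0.
Proof.
move=> [_ [Lf H]].
have E : (fun N => L2sq (fun t => psum c N t - f t)) =
         (fun N => (Q (fun t => psum c N t - f t))%:E).
  by apply: funext => N; rewrite L2sqE //; exact: isL2B (isL2_psum c N) Lf.
rewrite E in H; exact: (fine_cvg H).
Qed.

Lemma Aplus_mk c f : (forall n, 0 <= c n) -> isL2 f ->
  (fun N => Q (fun t => psum c N t - f t)) @ \oo --> 0 -> Aplus_rep c f.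
Proof.
move=> c0 Lf H; split => //; split => //.
have E : (fun N => L2sq (fun t => psum c N t - f t)) =
         (fun N => (Q (fun t => psum c N t - f t))%:E).
  by apply: funext => N; rewrite L2sqE //; exact: isL2B (isL2_psum c N) Lf.
rewrite E; apply: cvg_EFin => //; exact: nearW.
Qed.


Lemma psum_pert (c : nat -> R) n e N t : (n < N)%N ->
  psum (fun m => c m + (if m == n then e else 0)) N t = psum c N t + e * t ^+ n.
Proof.
elim: N => [//|N IH]; rewrite ltnS leq_eqVlt => /orP [/eqP <-|hn].
  rewrite psumS eqxx.
  have -> : psum (fun m => c m + (if m == n then e else 0)) n t = psum c n t.
    by rewrite /psum; apply: eq_big_nat => m /andP [_ hm]; rewrite ifN ?addr0 // ltn_eqF.
  by rewrite psumS mulrDl addrA.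
rewrite !psumS IH // ifN ?addr0; last by rewrite eq_sym ltn_eqF.
by rewrite addrAC.
Qed.

Lemma psum_scale (c : nat -> R) s N t : psum (fun m => s * c m) N t = s * psum c N t.
Proof. by rewrite /psum mulr_sumr; apply: eq_bigr => m _; rewrite mulrA. Qed.

Lemma ipZr k g h : isL2 g -> isL2 h ->
  ip g (fun x => k * h x) = k * ip g h.
Proof. by move=> Lg Lh; rewrite ipC ipZl // ipC. Qed.

Lemma psum_trunc (c : nat -> R) K N t : (forall m, (K <= m)%N -> c m = 0) ->
  (K <= N)%N -> psum c N t = psum c K t.
Proof.
move=> z; elim: N => [|N IH]; first by rewrite leqn0 => /eqP ->.
rewrite leq_eqVlt => /orP [/eqP <- //|]; rewrite ltnS => hK.
by rewrite psumS IH // z // mul0r addr0.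
Qed.

Lemma fin_Q0 (c : nat -> R) f K : Aplus_rep c f -> (forall m, (K <= m)%N -> c m = 0) ->
  Q (fun t => psum c K t - f t) = 0.
Proof.
move=> hA z; apply/eqP; rewrite eq_le ip_ge0 andbT.
apply: (@le0_of_eps _ 1) => // e e0.
have [N [hN hr]] := seq_small (Aplus_seq hA) e0 K.
rewrite mulr1; apply/ltW; move: hr.
have -> : (fun t => psum c N t - f t) = (fun t => psum c K t - f t).
  by apply: funext => t; rewrite (psum_trunc _ z hN).
by [].
Qed.

Lemma sqrt5E (a : R) : 0 < a -> (a <= 1 / Num.sqrt 5) = (5 * a ^+ 2 <= 1).
Proof.
move=> a0; have s0 : 0 < Num.sqrt (5:R) by rewrite sqrtr_gt0 ltr0n.
have s2 : Num.sqrt (5:R) ^+ 2 = 5 by rewrite sqr_sqrtr // ler0n.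
rewrite ler_pdivlMr //; set s := Num.sqrt 5 in s0 s2 *.
rewrite expr2 in s2; rewrite expr2.
have E : (a * s) * (a * s) = 5 * (a * a) by rewrite -s2; ring.
have as0 : 0 <= a * s by apply: mulr_ge0; apply: ltW.
apply/idP/idP => h.
  by rewrite -E; have := ler_pM as0 as0 h h; rewrite mulr1.
rewrite leNgt; apply/negP => H.
have := ltr_pM ler01 ler01 H H; rewrite mulr1 E; lra.
Qed.

Section Main.
Variables (a : R) (c : nat -> R) (f : R -> R).
Hypothesis hA : Aplus_rep c f.
Hypothesis hopt : forall c' f', Aplus_rep c' f' ->
  (L2sq (fun t => (psi a t - f t)%R) <= L2sq (fun t => (psi a t - f' t)%R))%E.

Let Lf : isL2 f. Proof. by case: hA => _ []. Qed.
Let c0 : forall n, 0 <= c n. Proof. by case: hA. Qed.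
Let Lu : isL2 (fun t => psi a t - f t). Proof. exact: isL2B (isL2_psi a) Lf. Qed.

Lemma opt_real c' f' : Aplus_rep c' f' ->
  Q (fun t => psi a t - f t) <= Q (fun t => psi a t - f' t).
Proof.
move=> hA'; have Lf' : isL2 f' by case: hA' => _ [].
rewrite -lee_fin -!L2sqE //; first exact: hopt hA'.
exact: isL2B (isL2_psi a) Lf'.
Qed.

Lemma pert n e : (forall m, 0 <= c m + (if m == n then e else 0)) ->
  0 <= e * (- 2 * ip (fun t => psi a t - f t) (mono n) + e * Q (mono n)).
Proof.
move=> hc'.
have A : Aplus_rep (fun m => c m + (if m == n then e else 0)) (fun t => f t + e * t ^+ n).
  apply: Aplus_mk => //; first exact: isL2D Lf (isL2Z e (isL2_mono n)).
  apply: (ev_cvg (K := n.+1) _ (Aplus_seq hA)) => N hN.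
  congr ip; apply: funext => t; rewrite psum_pert //; ring.
have := opt_real A.
have -> : (fun t => psi a t - (f t + e * t ^+ n)) =
          (fun t => (psi a t - f t) + (- e) * t ^+ n).
  by apply: funext => t; ring.
rewrite Qexp //; last exact: isL2_mono.
move=> H; nra.
Qed.

Lemma kkt_le n : ip (fun t => psi a t - f t) (mono n) <= 0.
Proof.
have : 0 <= - 2 * ip (fun t => psi a t - f t) (mono n).
  apply: (@alg_le _ (Q (mono n)) 1) => //; first exact: ip_ge0.
  move=> e e0 _; apply: pert => m.
  by case: eqP => _; rewrite ?addr0 //; apply: addr_ge0 => //; exact: ltW.
lra.
Qed.

Lemma kkt_ge n : 0 < c n -> 0 <= ip (fun t => psi a t - f t) (mono n).
Proof.
move=> cn.
have : 0 <= 2 * ip (fun t => psi a t - f t) (mono n).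
  apply: (@alg_le _ (Q (mono n)) (c n)) => //; first exact: ip_ge0.
  move=> e e0 ec; have := @pert n (- e).
  have H : forall m, 0 <= c m + (if m == n then - e else 0).
    move=> m; case: eqP => [->|_]; rewrite ?addr0 //; lra.
  move=> /(_ H); nra.
lra.
Qed.

Lemma kkt_scale : 0 <= ip (fun t => psi a t - f t) f.
Proof.
have : 0 <= 2 * ip (fun t => psi a t - f t) f.
  apply: (@alg_le _ (Q f) 1) => //; first exact: ip_ge0.
  move=> e e0 e1.
  have A : Aplus_rep (fun m => (1 - e) * c m) (fun t => (1 - e) * f t).
    apply: Aplus_mk => //; first by move=> m; apply: mulr_ge0 => //; lra.
      exact: isL2Z.
    have H : (fun N => (1 - e) ^+ 2 * Q (fun t => psum c N t - f t)) @ \oo --> 0.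
      rewrite -(mulr0 ((1 - e) ^+ 2)); apply: cvgM; [exact: cvg_cst | exact: Aplus_seq hA].
    apply: (ev_cvg (K := 0%N) _ H) => N _ /=.
    have -> : (fun t => psum (fun m => (1 - e) * c m) N t - (1 - e) * f t) =
              (fun t => (1 - e) * (psum c N t - f t)).
      by apply: funext => t; rewrite psum_scale; ring.
    have LN := isL2B (isL2_psum c N) Lf.
    rewrite ipZl //; last exact: isL2Z.
    by rewrite ipZr //; ring.
  have := opt_real A.
  have -> : (fun t => psi a t - (1 - e) * f t) =
            (fun t => (psi a t - f t) + e * f t).
    by apply: funext => t; ring.
  rewrite Qexp // => H; nra.
lra.
Qed.

Hypothesis ha : -1 <= a < 1.

Lemma ipu n : ip (fun t => psi a t - f t) (mono n) = Pa a n - ip f (mono n).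
Proof.
by rewrite ipBl ?ip_psi //; [exact: isL2_psi | exact: isL2_mono].
Qed.

Lemma ip_psumM (c' : nat -> R) K k :
  ip (psum c' K) (mono k) = \sum_(0 <= j < K) c' j * Mm R (j + k).
Proof.
rewrite ip_psum; last exact: isL2_mono.
by apply: eq_bigr => j _; rewrite ip_mono.
Qed.

Lemma sum3 (F : nat -> R) : \sum_(0 <= j < 3) F j = F 0%N + F 1%N + F 2%N.
Proof. by rewrite !big_nat_recr //= big_geq // add0r. Qed.

Lemma sum4 (F : nat -> R) : \sum_(0 <= j < 4) F j = F 0%N + F 1%N + F 2%N + F 3%N.
Proof. by rewrite big_nat_recr //= sum3. Qed.

Lemma transfer (K : nat) : (forall m, (K <= m)%N -> c m = 0) ->
  forall h, isL2 h -> ip f h = ip (psum c K) h.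
Proof.
move=> z h Lh; have Q0 := fin_Q0 hA z.
have := ip_zero (isL2B (isL2_psum c K) Lf) Q0 Lh.
rewrite ipBl //; [lra | exact: isL2_psum].
Qed.

Lemma fwd : supp c = [set 0%N; 1%N; 2%N] -> 0 < a /\ 5 * a ^+ 2 <= 1.
Proof.
move=> hs.
have pos : forall n, (n <= 2)%N -> 0 < c n.
  move=> n hn; have : supp c n by rewrite hs /=; case: n hn => [|[|[|]]] //=; auto.
  by [].
have z : forall m, (3 <= m)%N -> c m = 0.
  move=> m hm; apply/eqP; rewrite eq_le c0 andbT leNgt; apply/negP => cm.
  have : supp c m by [].
  by rewrite hs /= => -[[hm'|hm']|hm']; rewrite hm' in hm.
have tr := transfer z.
have key n : ip f (mono n) = c 0%N * Mm R n + c 1%N * Mm R n.+1 + c 2%N * Mm R n.+2.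
  by rewrite tr ?ip_psumM ?sum3 //; exact: isL2_mono.
have eqn n : (n <= 2)%N -> Pa a n = c 0%N * Mm R n + c 1%N * Mm R n.+1 + c 2%N * Mm R n.+2.
  move=> hn; have h1 := kkt_le n; have h2 := kkt_ge (pos n hn).
  rewrite ipu key in h1 h2; lra.
have ineq : Pa a 3 <= c 0%N * Mm R 3 + c 1%N * Mm R 4 + c 2%N * Mm R 5.
  have h1 := kkt_le 3; rewrite ipu key in h1; lra.
exact: (fwd_alg ha (pos 2%N isT) (eqn 0%N isT) (eqn 1%N isT) (eqn 2%N isT) ineq).
Qed.

Lemma bwd : 0 < a -> 5 * a ^+ 2 <= 1 ->
  [/\ c 0%N = q0 a, c 1%N = q1 a, c 2%N = q2 a & forall n, (3 <= n)%N -> c n = 0].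
Proof.
move=> a0 a5.
have [p0 p1 p2] := q_pos a0 a5.
pose qc (n : nat) := match n with 0 => q0 a | 1 => q1 a | 2 => q2 a | _ => 0 end.
pose q := psum qc 3.
have Lq : isL2 q := isL2_psum qc 3.
have qc0 : forall n, 0 <= qc n by case=> [|[|[|n]]] /=; rewrite ?lexx // ltW.
have ipq k : ip q (mono k) = q0 a * Mm R k + q1 a * Mm R k.+1 + q2 a * Mm R k.+2.
  by rewrite ip_psumM sum3.
have Lv : isL2 (fun t => psi a t - q t) := isL2B (isL2_psi a) Lq.
have gv n : ip (fun t => psi a t - q t) (mono n) = gfun a n.
  by rewrite ipBl ?ip_psi ?ipq //; [exact: isL2_psi | exact: isL2_mono].
have gle n : gfun a n <= 0.
  case: (leqP n 2) => hn; first by rewrite g_small.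
  by case: (g_sign a0 a5 hn).
have i1 : ip (fun t => psi a t - q t) q = 0.
  rewrite ipC ip_psum // sum3.
  rewrite !(ipC (mono _)) !gv !g_small //; lra.
have i2 : ip (fun t => psi a t - f t) q <= 0.
  rewrite ipC ip_psum // sum3 !(ipC (mono _)).
  have k0 := kkt_le 0; have k1 := kkt_le 1; have k2 := kkt_le 2.
  have := mulr_ge0_le0 (qc0 0%N) k0; have := mulr_ge0_le0 (qc0 1%N) k1.
  have := mulr_ge0_le0 (qc0 2%N) k2; lra.
have i3 := kkt_scale.
have i4 : ip (fun t => psi a t - q t) f <= 0.
  apply: (@le0_of_eps _ ((1 + Q (fun t => psi a t - q t)) / 2)).
    by apply: divr_ge0 => //; apply: addr_ge0 => //; exact: ip_ge0.
  move=> e e0.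
  have [N [_ hN]] := seq_small (Aplus_seq hA) (mulr_gt0 e0 e0) 0%N.
  set w := fun t => psum c N t - f t.
  have Lw : isL2 w := isL2B (isL2_psum c N) Lf.
  have Qw := Qexp e Lw Lv.
  have Q0 := ip_ge0 (fun x => w x + e * (psi a x - q x)).
  have E1 : ip (fun t => psi a t - q t) f =
            ip (fun t => psi a t - q t) (psum c N) - ip w (fun t => psi a t - q t).
    rewrite /w (ipBl (isL2_psum c N) Lf Lv).
    rewrite (ipC _ (psum c N)) (ipC f); ring.
  have E2 : ip (fun t => psi a t - q t) (psum c N) <= 0.
    rewrite ipC ip_psum //; apply: sumr_le0 => j _.
    by rewrite ipC gv; apply: mulr_ge0_le0.
  have hQv := ip_ge0 (fun t => psi a t - q t).
  set X := ip w (fun t => psi a t - q t) in Qw E1.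
  set V := Q (fun t => psi a t - q t) in Qw hQv *.
  rewrite Qw in Q0.
  have H : e * (2 * (- X) - e * (1 + V)) <= 0 by rewrite /w in hN; nra.
  have : 2 * (- X) - e * (1 + V) <= 0 by move: H; rewrite pmulr_rle0.
  rewrite E1; lra.
have Lfq : isL2 (fun t => f t - q t) := isL2B Lf Lq.
have Qfq : Q (fun t => f t - q t) = 0.
  apply/eqP; rewrite eq_le ip_ge0 andbT.
  rewrite (ipBl (isL2_psi a) Lq Lq) in i1.
  rewrite (ipBl (isL2_psi a) Lf Lq) in i2.
  rewrite (ipBl (isL2_psi a) Lf Lf) in i3.
  rewrite (ipBl (isL2_psi a) Lq Lf) in i4.
  rewrite (ipBl Lf Lq Lfq) (ipC f) (ipC q) (ipBl Lf Lq Lf) (ipBl Lf Lq Lq).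
  have Cqf := ipC q f; lra.
have tq : forall h, isL2 h -> ip f h = ip q h.
  move=> h Lh; have := ip_zero Lfq Qfq Lh; rewrite ipBl //; lra.
have z4 : forall n, (4 <= n)%N -> c n = 0.
  move=> n hn; apply/eqP; rewrite eq_le c0 andbT leNgt; apply/negP => cn.
  have := kkt_ge cn; rewrite ipu tq; last exact: isL2_mono.
  have G : Pa a n - ip q (mono n) = gfun a n.
    by rewrite -gv (ipBl (isL2_psi a) Lq (isL2_mono n)) ip_psi.
  move=> H; have := (g_sign a0 a5 (ltnW hn)).2 hn; lra.
have tr := transfer z4.
have eqk k : ip (psum c 4) (mono k) = ip q (mono k).
  by rewrite -tr ?tq //; exact: isL2_mono.
have E k : c 0%N * Mm R k + c 1%N * Mm R k.+1 + c 2%N * Mm R k.+2 + c 3%N * Mm R k.+3 =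
           q0 a * Mm R k + q1 a * Mm R k.+1 + q2 a * Mm R k.+2.
  by rewrite -ipq -eqk ip_psumM sum4.
have [e0 e1 e2 e3] := bwd_alg (E 0%N) (E 1%N) (E 2%N) (E 3%N).
split => // n; rewrite leq_eqVlt => /orP [/eqP <- //|]; exact: z4.
Qed.

End Main.

End S.

Unset Implicit Arguments.

Theorem proposition1p9 (R : realType) (a : R) (ha : -1 <= a < 1)
  (c : nat -> R) (hc : proj_coeffs (psi a) c) :
  (supp c = [set 0%N; 1%N; 2%N] <-> 0 < a <= 1 / Num.sqrt 5) /\
  (0 < a <= 1 / Num.sqrt 5 ->
     c 0%N = (4 - 9 * a + 5 * a ^+ 3) / 8 /\
     c 1%N = 3 / 4 * (1 - a ^+ 2) /\
     c 2%N = 15 / 8 * (a - a ^+ 3) /\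
     (forall n, (3 <= n)%N -> c n = 0)).
Proof.
have [f [hA hopt]] := hc.
have Hb := bwd hA hopt ha.
split.
- split.
  + move=> hs; have [a0 a5] := fwd hA hopt ha hs.
    by apply/andP; split => //; rewrite sqrt5E.
  + move=> /andP [a0 asq]; rewrite sqrt5E // in asq.
    have [e0 e1 e2 e3] := Hb a0 asq; have [p0 p1 p2] := q_pos a0 asq.
    apply/seteqP; split => n /=.
    * rewrite /supp /=; case: n => [|[|[|n]]] /= cn; [left; left|left; right|right|] => //.
      by rewrite e3 // ltxx in cn.
    * by move=> [[->|->]|->]; rewrite /supp /= ?e0 ?e1 ?e2.
- move=> /andP [a0 asq]; rewrite sqrt5E // in asq.
  by have [e0 e1 e2 e3] := Hb a0 asq; rewrite e0 e1 e2.
Qed.
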